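(* Let $k$ be a field of characteristic $0$ and $t$ transcendental over $k$. Let $m=\frac{at^2+bt+c}{dt^2+et+f}$ with $a,b,c,d,e,f\in k$, $a,d$ not both zero, $ae=bd$, $af\neq cd$, $b^2\neq 4ac$ and $e^2\neq 4df$. Then $[k(t):k(m)]=2$ and $\sqrt{m}\notin k(t)$. *)

(* Defs.v *)
From HB Require Import structures.
From mathcomp Require Import all_boot all_order all_algebra.
Set Implicit Arguments. Unset Strict Implicit. Unset Printing Implicit Defensive.
Import Order.TTheory GRing.Theory Num.Theory.
Local Open Scope ring_scope.

Definition ratfun (k : fieldType) := {fraction {poly k}}.

Definition tK (k : fieldType) : ratfun k := @FracField.tofrac _ ('X : {poly k}).

Definition cK (k : fieldType) (c : k) : ratfun k := @FracField.tofrac _ (c%:P).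

Definition evK (k : fieldType) (p : {poly k}) (x : ratfun k) : ratfun k :=
  (map_poly (@cK k) p).[x].

Definition in_km (k : fieldType) (m x : ratfun k) : Prop :=
  exists p q : {poly k}, evK q m != 0 /\ x = evK p m / evK q m.

Definition ext_degree_is (k : fieldType) (m : ratfun k) (n : nat) : Prop :=
  exists b : 'I_n -> ratfun k,
    (forall x : ratfun k, exists c : 'I_n -> ratfun k,
        (forall i, in_km m (c i)) /\ x = \sum_(i < n) c i * b i) /\
    (forall c : 'I_n -> ratfun k,
        (forall i, in_km m (c i)) -> \sum_(i < n) c i * b i = 0 ->
        forall i, c i = 0).

(* Main.v *)
Require Import Defs.
From HB Require Import structures.
From mathcomp Require Import all_boot all_order all_algebra.
From mathcomp Require Import ring.
Import Order.TTheory GRing.Theory Num.Theory.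
Local Open Scope ring_scope.
Set Implicit Arguments. Unset Strict Implicit.
Section Q.
Local Open Scope quotient_scope.

Lemma frac_repr (R: idomainType) (x : {fraction R}) : exists p q : R, q != 0 /\ x = (FracField.tofrac p) / (FracField.tofrac q).
Proof.
elim/quotW: x => r. exists (\n_r), (\d_r); split; first exact: denom_ratioP.
have h : (\pi_(FracField.type R) r) * (FracField.tofrac (\d_r)) = FracField.tofrac (\n_r).
  rewrite [FracField.tofrac _]piE [FracField.tofrac (\n_ _)]piE.
  rewrite [_ * _]piE.
  apply/eqmodP; rewrite /= FracField.equivfE /FracField.mulf.
  rewrite !numden_Ratio ?mulf_neq0 ?oner_neq0 ?denom_ratioP //.
  by rewrite !mulr1 mulrC.
have hd : FracField.tofrac (\d_r) != 0 by rewrite tofrac_eq0 denom_ratioP.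
by rewrite -h mulfK.
Qed.

End Q.

Lemma size2_form (k : fieldType) (P : {poly k}) : size P = 2%N ->
  P = (P`_1)%:P * 'X + (P`_0)%:P.
Proof.
move=> hs; apply/polyP => i; rewrite !coefE.
case: i => [|[|i]] /=; rewrite ?mulr0 ?mulr1 ?add0r ?addr0 //.
by rewrite nth_default ?hs.
Qed.

Lemma nodisc (k : fieldType) (al be ga la : k) (P : {poly k}) :
  al != 0 -> be ^+ 2 != 4%:R * al * ga ->
  al%:P * 'X^2 + be%:P * 'X + ga%:P != la%:P * P ^+ 2.
Proof.
move=> ha hd; apply/eqP => E.
have hs : size (al%:P * 'X^2 + be%:P * 'X + ga%:P) = 3%N.
  have -> : al%:P * 'X^2 + be%:P * 'X + ga%:P = (al%:P * 'X + be%:P) * 'X + ga%:P.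
    by rewrite mulrDl -mulrA -expr2.
  have h : al%:P * 'X + be%:P != 0.
    by rewrite -size_poly_eq0 size_MXaddC polyC_eq0 (negPf ha).
  by rewrite size_MXaddC (negPf h) size_MXaddC polyC_eq0 (negPf ha) /= size_polyC ha.
have hla : la != 0 by apply/eqP=> h0; move: hs; rewrite E h0 polyC0 mul0r size_poly0.
have hP : P != 0 by apply/eqP=> h0; move: hs; rewrite E h0 expr0n /= mulr0 size_poly0.
have : size P = 2%N.
  move: hs; rewrite E size_mul ?polyC_eq0 ?expf_neq0 // size_polyC hla /=.
  have := size_exp P 2; case: (size (P ^+ 2)) => // n /= ->.
  by case: (size P) => [|[|[|j]]] //=; rewrite mulnC /= => /eqP; rewrite !eqSS.
move/size2_form => EP; move: E; rewrite EP => E.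
move: E; set u := P`_1; set v := P`_0 => E.
have E2 : la%:P * (u%:P * 'X + v%:P) ^+ 2 = (la*u^+2)%:P * 'X^2 + (2%:R*la*u*v)%:P * 'X + (la*v^+2)%:P.
  rewrite !expr2 !polyCM polyC_natr; ring.
move: E; rewrite E2 => E.
have c0 := congr1 (fun q : {poly k} => q`_0) E; have c1 := congr1 (fun q : {poly k} => q`_1) E;
  have c2 := congr1 (fun q : {poly k} => q`_2) E.
move: c0 c1 c2; rewrite /= !coefE /= !(mulr0, mulr1, addr0, add0r) => h0 h1 h2.
by apply/(negP hd)/eqP; rewrite h0 h1 h2; ring.
Qed.

Lemma sq_split (k: fieldType) (N D p q u v : {poly k}) (de : k) :
  de != 0 -> u * N + v * D = de%:P -> N != 0 -> q != 0 ->
  p ^+ 2 * D = N * q ^+ 2 ->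
  exists la P Q, N = la%:P * P ^+ 2 /\ D = la%:P * Q ^+ 2.
Proof.
move=> hde hb hN hq E.
set g := gcdp p q.
have hg : g != 0 by rewrite gcdp_eq0 negb_and hq orbT.
set p1 := p %/ g; set q1 := q %/ g.
have hp : p = p1 * g by rewrite divpK // dvdp_gcdl.
have hq' : q = q1 * g by rewrite divpK // dvdp_gcdr.
have cop : coprimep p1 q1 by apply: coprimep_div_gcd; rewrite hq orbT.
have E1 : p1 ^+ 2 * D = N * q1 ^+ 2.
  apply/eqP; rewrite -subr_eq0; apply/eqP.
  have : (p1 ^+ 2 * D - N * q1 ^+ 2) * g ^+ 2 = 0.
    rewrite mulrBl; apply/eqP; rewrite subr_eq0; apply/eqP.
    by move: E; rewrite hp hq' !exprMn => E; rewrite mulrAC E mulrA.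
  by move/eqP; rewrite mulf_eq0 expf_eq0 (negPf hg) andbF orbF => /eqP.
have hq1 : q1 != 0 by apply: contraNneq hq => h; rewrite hq' h mul0r.
have hp1 : p1 != 0.
  apply: contraNneq hN => h; move: (E1); rewrite h expr0n /= mul0r => /esym/eqP.
  by rewrite mulf_eq0 expf_eq0 (negPf hq1) andbF orbF.
have cop2 : coprimep (q1 ^+ 2) (p1 ^+ 2) by rewrite coprimep_expl // coprimep_expr // coprimep_sym.
have hqD : q1 ^+ 2 %| D by rewrite -(Gauss_dvdpr _ cop2) E1 dvdp_mull.
have cop3 : coprimep (p1 ^+ 2) (q1 ^+ 2) by rewrite coprimep_expl // coprimep_expr.
have hpN : p1 ^+ 2 %| N by rewrite -(Gauss_dvdpl _ cop3) -E1 dvdp_mulr.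
set D' := D %/ q1 ^+ 2; set N' := N %/ p1 ^+ 2.
have eD : D = D' * q1 ^+ 2 by rewrite divpK.
have eN : N = N' * p1 ^+ 2 by rewrite divpK.
have eND : D' = N'.
  apply/eqP; rewrite -subr_eq0; apply/eqP.
  have : (D' - N') * (p1 ^+ 2 * q1 ^+ 2) = 0.
    rewrite mulrBl; apply/eqP; rewrite subr_eq0; apply/eqP.
    by rewrite mulrCA -eD E1 {1}eN; ring.
  have hpq : p1 ^+ 2 * q1 ^+ 2 != 0 by rewrite mulf_neq0 ?expf_neq0.
  by move/eqP; rewrite mulf_eq0 (negPf hpq) orbF => /eqP.
have hdv : N' %| de%:P by rewrite -hb dvdp_add // ?eN -?eND ?eD dvdp_mull // dvdp_mulr.
have hs : (size N' <= 1)%N.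
  by have := dvdp_leq _ hdv; rewrite polyC_eq0 hde size_polyC hde; apply.
exists (N'`_0), p1, q1; rewrite -(size1_polyC hs).
by rewrite {1}eN {1}eD eND !(mulrC N').
Qed.

Section S.
Variable k : fieldType.
Local Notation tf := (@FracField.tofrac {poly k}).
Implicit Types (x y m : ratfun k) (p q : {poly k}).

Lemma evKE p x : evK p x = (map_poly (tf \o polyC) p).[x].
Proof. by rewrite /evK; congr (_.[_]); apply: eq_map_poly. Qed.
Lemma evKD p q x : evK (p + q) x = evK p x + evK q x.
Proof. by rewrite !evKE rmorphD hornerD. Qed.
Lemma evKM p q x : evK (p * q) x = evK p x * evK q x.
Proof. by rewrite !evKE rmorphM hornerM. Qed.
Lemma evKC c x : evK c%:P x = cK c.
Proof. by rewrite evKE map_polyC hornerC. Qed.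
Lemma evKX x : evK 'X x = x.
Proof. by rewrite evKE map_polyX hornerX. Qed.
Lemma evK1 x : evK 1 x = 1.
Proof. by rewrite -polyC1 evKC /cK rmorph1. Qed.
Lemma evKN p x : evK (- p) x = - evK p x.
Proof. by rewrite !evKE rmorphN hornerN. Qed.

Lemma in_km_ev m p : in_km m (evK p m).
Proof. by exists p, 1; rewrite evK1 oner_neq0 divr1. Qed.

Lemma in_km_add m x y : in_km m x -> in_km m y -> in_km m (x + y).
Proof.
move=> [p [q [hq ->]]] [p' [q' [hq' ->]]].
exists (p * q' + p' * q), (q * q'); rewrite evKM; split; first exact: (mulf_neq0 hq hq').
by rewrite evKD !evKM (addf_div _ _ hq hq').
Qed.

Lemma in_km_mul m x y : in_km m x -> in_km m y -> in_km m (x * y).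
Proof.
move=> [p [q [hq ->]]] [p' [q' [hq' ->]]].
exists (p * p'), (q * q'); rewrite evKM; split; first exact: (mulf_neq0 hq hq').
by rewrite !evKM mulf_div.
Qed.

Lemma in_km_opp m x : in_km m x -> in_km m (- x).
Proof.
move=> [p [q [hq ->]]]; exists (- p), q; split => //.
by rewrite evKN mulNr.
Qed.

Lemma in_km_inv m x : in_km m x -> in_km m (x^-1).
Proof.
move=> [p [q [hq ->]]].
have [hp|hp] := eqVneq (evK p m) 0.
  by exists 0, 1; rewrite hp mul0r invr0 -polyC0 evKC /cK rmorph0 mul0r evK1 oner_neq0.
by exists q, p; split => //; rewrite invf_div.
Qed.

Lemma in_km_cK m c : in_km m (cK c).
Proof. by rewrite -(evKC c m); apply: in_km_ev. Qed.

Lemma in_km_m m : in_km m m.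
Proof. by rewrite -{2}(evKX m); apply: in_km_ev. Qed.

Variable r : k.
Definition sym p := p \Po (- r%:P - 'X) = p.
Definition Fix x := exists A B, [/\ sym A, sym B, B != 0 & x = tf A / tf B].

Lemma symD p q : sym p -> sym q -> sym (p + q).
Proof. by rewrite /sym comp_polyD => -> ->. Qed.
Lemma symM p q : sym p -> sym q -> sym (p * q).
Proof. by rewrite /sym comp_polyM => -> ->. Qed.
Lemma symC c : sym c%:P.
Proof. by rewrite /sym comp_polyC. Qed.

Lemma tf_neq0 p : p != 0 -> tf p != 0.
Proof. by rewrite tofrac_eq0. Qed.

Lemma Fix_poly A : sym A -> Fix (tf A).
Proof. by move=> h; exists A, 1; rewrite rmorph1 divr1 oner_neq0; split => //; apply: symC. Qed.

Lemma Fix_add x y : Fix x -> Fix y -> Fix (x + y).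
Proof.
move=> [A [B [sA sB hB ->]]] [A' [B' [sA' sB' hB' ->]]].
exists (A * B' + A' * B), (B * B'); split; rewrite ?mulf_neq0 //.
- by apply: symD; apply: symM.
- exact: symM.
by rewrite addf_div ?tf_neq0 // !rmorphD !rmorphM.
Qed.

Lemma Fix_mul x y : Fix x -> Fix y -> Fix (x * y).
Proof.
move=> [A [B [sA sB hB ->]]] [A' [B' [sA' sB' hB' ->]]].
exists (A * A'), (B * B'); split; rewrite ?mulf_neq0 //; try exact: symM.
by rewrite mulf_div !rmorphM.
Qed.

Lemma Fix_evK m p : Fix m -> Fix (evK p m).
Proof.
move=> hm; elim/poly_ind: p => [|p c ih].
  by rewrite -polyC0 evKC; apply: Fix_poly; apply: symC.
rewrite evKD evKM evKX evKC; apply: Fix_add; first exact: Fix_mul.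
by apply: Fix_poly; apply: symC.
Qed.

Lemma Fix_in_km m x : Fix m -> in_km m x -> Fix x.
Proof.
move=> hm [p [q [hq ->]]].
have [A [B [sA sB hB ->]]] := Fix_evK p hm.
have [A' [B' [sA' sB' hB' eq]]] := Fix_evK q hm.
rewrite eq in hq *.
have hA' : A' != 0 by apply: contraNneq hq => ->; rewrite rmorph0 mul0r.
exists (A * B'), (B * A'); split; rewrite ?mulf_neq0 //; try exact: symM.
by rewrite invf_div mulf_div !rmorphM.
Qed.

Lemma indep c0 c1 : 2%:R != 0 :> k -> Fix c0 -> Fix c1 -> c0 + c1 * tf 'X = 0 -> c1 = 0.
Proof.
move=> h2 [A0 [B0 [sA0 sB0 hB0 ->]]] [A1 [B1 [sA1 sB1 hB1 ->]]] E.
have E' : A0 * B1 + A1 * 'X * B0 = 0.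
  apply/eqP; rewrite -tofrac_eq0; apply/eqP.
  move: E; rewrite mulrAC addf_div ?tf_neq0 // => /eqP.
  rewrite mulf_eq0 invr_eq0 mulf_eq0 !tofrac_eq0 (negPf hB0) (negPf hB1) !orbF.
  by rewrite rmorphD !rmorphM => /eqP.
have E'' := congr1 (fun P => P \Po (- r%:P - 'X)) E'.
move: E''; rewrite /= comp_polyD !comp_polyM comp_polyX sA0 sB0 sA1 sB1 comp_poly0 => E''.
have : A1 * B0 * (2%:R * 'X + r%:P) = 0.
  have -> : A1 * B0 * (2%:R * 'X + r%:P) = (A0 * B1 + A1 * 'X * B0) - (A0 * B1 + A1 * (- r%:P - 'X) * B0).
    ring.
  by rewrite E' E'' subr0.
move/eqP; rewrite !mulf_eq0 (negPf hB0) orbF.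
have -> : (2%:R * 'X + r%:P == 0) = false.
  apply/negP => /eqP h; have := congr1 (fun P : {poly k} => P`_1) h.
  by rewrite /= !coefE /= addr0 => h3; rewrite h3 eqxx in h2.
by rewrite orbF => /eqP ->; rewrite rmorph0 mul0r.
Qed.

End S.

Lemma two (k : fieldType) : [pchar k] =i pred0 -> 2%:R != 0 :> k.
Proof. move=> h; apply/negP => /eqP h2; have := h 2%N; rewrite !inE /= h2 eqxx. done. Qed.

Lemma quad0 (k : fieldType) (al be ga : k) :
  al%:P * 'X^2 + be%:P * 'X + ga%:P = 0 -> [/\ al = 0, be = 0 & ga = 0].
Proof.
move=> E.
have c0 := congr1 (fun q : {poly k} => q`_0) E; have c1 := congr1 (fun q : {poly k} => q`_1) E;
  have c2 := congr1 (fun q : {poly k} => q`_2) E.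
move: c0 c1 c2; rewrite /= !coefE /= !(mulr0, mulr1, addr0, add0r) => h0 h1 h2.
by split.
Qed.

Lemma tf_lin (k : fieldType) (x y : {poly k}) (al be : k) :
  FracField.tofrac (al%:P * x + be%:P * y) = cK al * FracField.tofrac x + cK be * FracField.tofrac y.
Proof. by rewrite rmorphD !rmorphM. Qed.

Lemma cKM (k : fieldType) (x y : k) : cK (x * y) = cK x * cK y.
Proof. by rewrite /cK polyCM rmorphM. Qed.

Lemma tf_quad (k : fieldType) (al be ga : k) :
  FracField.tofrac (al%:P * 'X^2 + be%:P * 'X + ga%:P) = cK al * tK k ^+ 2 + cK be * tK k + cK ga.
Proof. by rewrite !rmorphD !rmorphM -expr2. Qed.

Unset Implicit Arguments. Set Strict Implicit.

Theorem lemma2p4 (k : fieldType) (a b c d e f : k) :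
  [pchar k] =i pred0 ->
  (a != 0) || (d != 0) ->
  a * e = b * d ->
  a * f != c * d ->
  b ^+ 2 != 4%:R * a * c ->
  e ^+ 2 != 4%:R * d * f ->
  let m : ratfun k :=
    (cK a * tK k ^+ 2 + cK b * tK k + cK c) /
    (cK d * tK k ^+ 2 + cK e * tK k + cK f) in
  ext_degree_is m 2 /\ ~ (exists y : ratfun k, y ^+ 2 = m).
Proof.
move=> hch hn hae haf hdb hde m.
have h2 := two hch.
pose tf := @FracField.tofrac {poly k}.
set r := if a != 0 then b / a else e / d.
have [hbr her] : b = a * r /\ e = d * r.
  rewrite /r; case: (eqVneq a 0) => ha /=.
    have hd0 : d != 0 by move: hn; rewrite ha eqxx.
    have hb0 : b = 0.
      by apply/eqP; move: hae; rewrite ha mul0r => /esym/eqP; rewrite mulf_eq0 (negPf hd0) orbF.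
    by rewrite ha hb0 mul0r; split=> //; field.
  split; first by field.
  apply: (mulfI ha); rewrite hae; field => //.
set Np := a%:P * 'X^2 + b%:P * 'X + c%:P.
set Dp := d%:P * 'X^2 + e%:P * 'X + f%:P.
have hm : m = tf Np / tf Dp.
  by rewrite /m /tf /Np /Dp !rmorphD !rmorphM -!expr2.
have de0 : a * f - c * d != 0 by rewrite subr_eq0.
have bez : (- d)%:P * Np + a%:P * Dp = (a * f - c * d)%:P.
  rewrite /Np /Dp hbr her !polyCM polyCB polyCM polyCN; ring.
have hDp : Dp != 0.
  apply/eqP => /quad0 [hd0 he0 hf0]; move: hde; rewrite hd0 he0 hf0.
  by rewrite expr0n /= ?mulr0 ?mul0r eqxx.
have hNp : Np != 0.
  apply/eqP => /quad0 [ha0 hb0 hc0]; move: hdb; rewrite ha0 hb0 hc0.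
  by rewrite expr0n /= ?mulr0 ?mul0r eqxx.
split; last first.
  move=> [y hy]; have [p [q [hq ey]]] := frac_repr y.
  move: hy; rewrite ey hm expr_div_n => /eqP.
  rewrite (eqr_div _ _ (expf_neq0 2 (tf_neq0 hq)) (tf_neq0 hDp)) -!rmorphXn -!rmorphM tofrac_eq => /eqP E.
  have [la [P [Q [eN eD]]]] := sq_split de0 bez hNp hq E.
  case/orP: hn => [ha|hd0].
    by move: eN; apply/eqP; apply: nodisc.
  by move: eD; apply/eqP; apply: nodisc.
set t := tK k.
have htf : t = tf 'X by [].
have hsN : sym r Np.
  rewrite /sym /Np !expr2 !comp_polyD !comp_polyM !comp_polyC !comp_polyX hbr polyCM; ring.
have hsD : sym r Dp.
  rewrite /sym /Dp !expr2 !comp_polyD !comp_polyM !comp_polyC !comp_polyX her polyCM; ring.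
have hFm : Fix r m by exists Np, Dp; split.
have hmD : m * tf Dp = tf Np by rewrite hm divfK // tf_neq0.
pose u := cK a - m * cK d.
have hu : u * tf Dp = tf ((- d)%:P * Np + a%:P * Dp).
  rewrite /u mulrBl -mulrA (mulrC (cK d)) mulrA hmD /tf tf_lin /cK polyCN rmorphN; ring.
have hu0 : u != 0.
  apply/eqP => h0; move: hu; rewrite h0 mul0r bez => /esym/eqP.
  by rewrite tofrac_eq0 polyC_eq0 (negPf de0).
pose g := (cK c - m * cK f) / u.
have eN : tf Np = cK a * (t ^+ 2 + cK r * t) + cK c.
  rewrite /tf /Np tf_quad hbr cKM -/t; ring.
have eD : tf Dp = cK d * (t ^+ 2 + cK r * t) + cK f.
  rewrite /tf /Dp tf_quad her cKM -/t; ring.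
have key : u * (t ^+ 2 + cK r * t) + (cK c - m * cK f) = 0.
  have : (u * (t ^+ 2 + cK r * t) + (cK c - m * cK f)) * tf Dp =
    tf Dp * (cK a * (t ^+ 2 + cK r * t) + cK c) - (m * tf Dp) * (cK d * (t ^+ 2 + cK r * t) + cK f).
    rewrite /u; ring.
  rewrite hmD -eN -eD [tf Dp * _]mulrC subrr => /eqP.
  by rewrite mulf_eq0 (negPf (tf_neq0 hDp)) orbF => /eqP.
have hsum : t ^+ 2 + cK r * t = - g.
  apply: (mulfI hu0); rewrite /g mulrN [u * (_ / u)]mulrC (divfK hu0).
  by apply/eqP; rewrite -subr_eq0 opprK key.
have ht2 : t ^+ 2 = - cK r * t - g.
  have -> : t ^+ 2 = (t ^+ 2 + cK r * t) - cK r * t by ring.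
  rewrite hsum; ring.
have in1 : in_km m 1 by have := in_km_cK m 1; rewrite /cK polyC1 rmorph1; apply.
have in0 : in_km m 0 by have := in_km_cK m 0; rewrite /cK polyC0 rmorph0; apply.
have indk : forall c0 c1, in_km m c0 -> in_km m c1 -> c0 + c1 * t = 0 -> c1 = 0.
  move=> c0 c1 h0 h1; exact: (indep h2 (Fix_in_km hFm h0) (Fix_in_km hFm h1)).
have ing : in_km m g.
  rewrite /g /u.
  exact: (in_km_mul (in_km_add (in_km_cK m c) (in_km_opp (in_km_mul (in_km_m m) (in_km_cK m f))))
     (in_km_inv (in_km_add (in_km_cK m a) (in_km_opp (in_km_mul (in_km_m m) (in_km_cK m d)))))).
have inr := in_km_cK m r.
pose S x := exists c0 c1, [/\ in_km m c0, in_km m c1 & x = c0 + c1 * t].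
have S_add : forall x y, S x -> S y -> S (x + y).
  move=> x y [c0 [c1 [h0 h1 ->]]] [e0 [e1 [k0 k1 ->]]].
  exists (c0 + e0), (c1 + e1); split; [exact: (in_km_add h0 k0) | exact: (in_km_add h1 k1) | ring].
have S_mul : forall x y, S x -> S y -> S (x * y).
  move=> x y [c0 [c1 [h0 h1 ->]]] [e0 [e1 [k0 k1 ->]]].
  exists (c0 * e0 - c1 * e1 * g), (c0 * e1 + c1 * e0 - cK r * c1 * e1); split.
  - exact: (in_km_add (in_km_mul h0 k0) (in_km_opp (in_km_mul (in_km_mul h1 k1) ing))).
  - exact: (in_km_add (in_km_add (in_km_mul h0 k1) (in_km_mul h1 k0))
       (in_km_opp (in_km_mul (in_km_mul inr h1) k1))).
  have -> : (c0 + c1 * t) * (e0 + e1 * t) = c0 * e0 + (c0 * e1 + c1 * e0) * t + c1 * e1 * t ^+ 2 by ring.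
  rewrite ht2; ring.
have S_cK : forall z, S (cK z).
  by move=> z; exists (cK z), 0; split; [exact: in_km_cK | exact: in0 | rewrite mul0r addr0].
have S_t : S t by exists 0, 1; split; [exact: in0 | exact: in1 | rewrite mul1r add0r].
have S_inv : forall x, x != 0 -> S x -> S (x^-1).
  move=> x hx [c0 [c1 [h0 h1 ex]]].
  pose z := (c0 - cK r * c1) - c1 * t.
  pose Nr := c0 ^+ 2 - cK r * c0 * c1 + c1 ^+ 2 * g.
  have hxz : x * z = Nr.
    rewrite ex /z /Nr.
    have -> : (c0 + c1 * t) * (c0 - cK r * c1 - c1 * t) = c0 ^+ 2 - cK r * c0 * c1 - cK r * c1 ^+ 2 * t - c1 ^+ 2 * t ^+ 2 by ring.
    rewrite ht2; ring.
  have hz : z != 0.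
    apply/eqP => hz0.
    have hc1 : - c1 = 0.
      apply: (indk (c0 - cK r * c1) (- c1)).
      - exact: (in_km_add h0 (in_km_opp (in_km_mul inr h1))).
      - exact: (in_km_opp h1).
      by rewrite mulNr.
    have hc1' : c1 = 0 by rewrite -[c1]opprK hc1 oppr0.
    move: hz0; rewrite /z hc1' mul0r mulr0 !subr0 => hc0.
    by move: hx; rewrite ex hc0 hc1' mul0r addr0 eqxx.
  have hN : Nr != 0 by rewrite -hxz (mulf_neq0 hx hz).
  have hinv : x^-1 = z / Nr.
    have h1' : x * (z / Nr) = 1 by rewrite mulrA hxz (mulfV hN).
    by rewrite -[z / Nr](mulKf hx) h1' mulr1.
  rewrite hinv; exists ((c0 - cK r * c1) / Nr), (- c1 / Nr).
  have inN : in_km m Nr.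
    exact: (in_km_add (in_km_add (in_km_mul h0 h0) (in_km_opp (in_km_mul (in_km_mul inr h0) h1)))
       (in_km_mul (in_km_mul h1 h1) ing)).
  split.
  - exact: (in_km_mul (in_km_add h0 (in_km_opp (in_km_mul inr h1))) (in_km_inv inN)).
  - exact: (in_km_mul (in_km_opp h1) (in_km_inv inN)).
  rewrite /z; ring.
have S_poly : forall P : {poly k}, S (tf P).
  elim/poly_ind => [|P z ih].
    by rewrite /tf rmorph0; exists 0, 0; split; [exact: in0 | exact: in0 | rewrite mul0r addr0].
  rewrite /tf rmorphD rmorphM; apply: S_add; first exact: (S_mul _ _ ih S_t).
  exact: (S_cK z).
have S_all : forall x, S x.
  move=> x; have [P [Q [hQ ->]]] := frac_repr x.
  exact: (S_mul _ _ (S_poly P) (S_inv _ (tf_neq0 hQ) (S_poly Q))).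
exists (fun i : 'I_2 => t ^+ i); split.
  move=> x; have [c0 [c1 [h0 h1 ->]]] := S_all x.
  exists (fun i : 'I_2 => if val i == 0%N then c0 else c1); split.
    by move=> i; case: ifP.
  rewrite !big_ord_recl big_ord0 /=.
  by have -> : bump 0 0 = 1%N by []; rewrite expr0 expr1 mulr1 addr0.
move=> cc hc; rewrite !big_ord_recl big_ord0 /=.
have -> : bump 0 0 = 1%N by [].
rewrite expr0 expr1 mulr1 addr0 => E.
have e1 := indk _ _ (hc ord0) (hc _) E.
have e0 : cc ord0 = 0 by move: E; rewrite e1 mul0r addr0.
move=> [[|[|j]] hj] //.
  by rewrite -e0; congr cc; apply: val_inj.
by rewrite -e1; congr cc; apply: val_inj.
Qed.
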